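(* Let $r,\alpha\in\mathbb R$, $\sigma>0$, and let $d_1<d_2$ be the (assumed real and distinct) roots of $P(d)=\frac{\sigma^2}{2}d^2+(\alpha-\frac{\sigma^2}{2})d-r$. Let $x>0$, $\beta\in\mathbb R$, $a,b>0$, and for $c>0$, $t>0$ put $$H(t;c)=\Phi\left(\frac{1}{\sigma\sqrt t}\ln\left(\frac{c}{x}\right)+\sigma\left(\frac{d_1+d_2}{2}-\beta\right)\sqrt t\right),$$ where $\Phi$ is the standard normal distribution function. Then: 1) if $\beta<d_2$, then $\lim_{t\to\infty}x^\beta e^{P(\beta)t}[1-H(t;a)]=0$; 2) if $\beta>d_1$, then $\lim_{t\to\infty}x^\beta e^{P(\beta)t}H(t;b)=0$; 3) if $\beta=0$, then $\lim_{t\to\infty}x^\beta e^{P(\beta)t}[H(t;b)-H(t;a)]=0$. *)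

(* Defs.v *)
From Stdlib Require Import Reals.
From Coquelicot Require Import Coquelicot.
Open Scope R_scope.

Definition Phi (z : R) : R :=
  / sqrt (2 * PI) *
  RInt_gen (fun u => exp (- u ^ 2 / 2)) (Rbar_locally m_infty) (at_point z).

Definition Pquad (r alpha sigma d : R) : R :=
  sigma ^ 2 / 2 * d ^ 2 + (alpha - sigma ^ 2 / 2) * d - r.

Definition Hfun (sigma x d1 d2 beta c t : R) : R :=
  Phi (/ (sigma * sqrt t) * ln (c / x) + sigma * ((d1 + d2) / 2 - beta) * sqrt t).

(* Main.v *)
From Stdlib Require Import Reals Lra.
From Coquelicot Require Import Coquelicot.
Require Import Defs.
Open Scope R_scope.

Lemma exp_le' x y : x <= y -> exp x <= exp y.
Proof. intros [H|H]; [left; now apply exp_increasing | subst; lra]. Qed.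

Definition gf (u : R) : R := exp (- u ^ 2 / 2).
Definition GG (x : R) : R := RInt gf 0 x.
Definition kk (x t : R) : R := exp (- (x ^ 2 * (1 + t ^ 2)) / 2) / (1 + t ^ 2).
Definition h1 (x : R) : R := RInt (fun t => kk x t) 0 1.
Definition FF (x : R) : R := GG x ^ 2 + 2 * h1 x.

Lemma gf_cont x : continuous gf x.
Proof. apply (ex_derive_continuous (K:=R_AbsRing) (V:=R_NormedModule)). unfold gf. auto_derive. easy. Qed.

Lemma ex_RInt_gf a b : ex_RInt gf a b.
Proof. apply (ex_RInt_continuous (V:=R_CompleteNormedModule)). intros; apply gf_cont. Qed.

Lemma GG_deriv x : is_derive GG x (gf x).
Proof.
  apply (is_derive_RInt gf GG 0).
  - apply filter_forall. intros y. apply (RInt_correct (V:=R_CompleteNormedModule)), ex_RInt_gf.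
  - apply gf_cont.
Qed.

Lemma kk_deriv x t : is_derive (fun z => kk z t) x (- x * exp (- (x ^ 2 * (1 + t ^ 2)) / 2)).
Proof.
  unfold kk. auto_derive.
  - easy.
  - replace (- (x * (x * 1) * (1 + t * (t * 1))) * / 2) with (- (x ^ 2 * (1 + t ^ 2)) / 2) by (simpl; field).
    field. nra.
Qed.

Lemma kk_cont x t : continuous (fun t => kk x t) t.
Proof. apply (ex_derive_continuous (K:=R_AbsRing) (V:=R_NormedModule)). unfold kk. auto_derive. nra. Qed.

Lemma ex_RInt_kk x a b : ex_RInt (fun t => kk x t) a b.
Proof. apply (ex_RInt_continuous (V:=R_CompleteNormedModule)). intros; apply kk_cont. Qed.

Lemma h1_deriv x : is_derive h1 x (RInt (fun t => - x * exp (- (x ^ 2 * (1 + t ^ 2)) / 2)) 0 1).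
Proof.
  assert (E : RInt (fun t => - x * exp (- (x ^ 2 * (1 + t ^ 2)) / 2)) 0 1
            = RInt (fun t => Derive (fun u => kk u t) x) 0 1).
  { apply RInt_ext. intros t _. symmetry. apply is_derive_unique, kk_deriv. }
  rewrite E. unfold h1.
  apply (is_derive_RInt_param kk 0 1 x).
  - apply filter_forall. intros y t _. eexists. apply kk_deriv.
  - intros t _.
    apply continuity_2d_pt_ext with (f := fun u v => - u * exp (- (u ^ 2 * (1 + v ^ 2)) / 2)).
    { intros u v. symmetry. apply is_derive_unique, kk_deriv. }
    apply continuity_2d_pt_mult.
    + apply continuity_2d_pt_opp, continuity_2d_pt_id1.
    + apply (continuity_1d_2d_pt_comp exp (fun u v => - (u ^ 2 * (1 + v ^ 2)) / 2)).
      * apply derivable_continuous_pt, derivable_pt_exp.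
      * unfold Rdiv. apply continuity_2d_pt_mult; [|apply continuity_2d_pt_const].
        apply continuity_2d_pt_opp. simpl.
        repeat first [apply continuity_2d_pt_mult | apply continuity_2d_pt_plus
                     | apply continuity_2d_pt_id1 | apply continuity_2d_pt_id2
                     | apply continuity_2d_pt_const].
  - apply filter_forall. intros y. apply ex_RInt_kk.
Qed.

Lemma inner x : RInt (fun t => - x * exp (- (x ^ 2 * (1 + t ^ 2)) / 2)) 0 1 = - gf x * GG x.
Proof.
  transitivity (RInt (fun t => scal (- gf x) (scal x (gf (x * t + 0)))) 0 1).
  { apply RInt_ext. intros t _. unfold gf, scal; simpl; unfold mult; simpl.
    replace (exp (- (x * (x * 1) * (1 + t * (t * 1))) / 2)) with
      (exp (- (x * (x * 1)) / 2) * exp (- ((x * t + 0) * ((x * t + 0) * 1)) / 2)).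
    { ring. }
    rewrite <- exp_plus. f_equal. field. }
  rewrite (RInt_scal (V:=R_CompleteNormedModule)).
  - rewrite (RInt_comp_lin (V:=R_CompleteNormedModule)).
    + replace (x * 0 + 0) with 0 by ring. replace (x * 1 + 0) with x by ring.
      reflexivity.
    + apply ex_RInt_gf.
  - apply (ex_RInt_continuous (V:=R_CompleteNormedModule)). intros z _.
    apply (ex_derive_continuous (K:=R_AbsRing) (V:=R_NormedModule)).
    unfold gf, scal; simpl; unfold mult; simpl. auto_derive. easy.
Qed.

Lemma FF_deriv x : is_derive FF x 0.
Proof.
  unfold FF.
  assert (H := is_derive_plus _ _ x _ _ (is_derive_pow GG 2 x _ (GG_deriv x))
                (is_derive_scal h1 x 2 _ (h1_deriv x))).
  rewrite inner in H. simpl in H.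
  replace 0 with (plus (INR 2 * gf x * (GG x * 1)) (scal 2 (- gf x * GG x))).
  - exact H.
  - unfold plus, scal; simpl; unfold mult; simpl. ring.
Qed.

Lemma FF_const x : FF x = FF 0.
Proof.
  assert (H : is_RInt (fun _ => 0) 0 x (minus (FF x) (FF 0))).
  { apply (is_RInt_derive (V:=R_CompleteNormedModule) FF (fun _ => 0)).
    - intros; apply FF_deriv.
    - intros; apply continuous_const. }
  assert (H2 := is_RInt_const (V:=R_NormedModule) 0 x 0).
  assert (E := is_RInt_unique (V:=R_CompleteNormedModule) _ _ _ _ H).
  rewrite (is_RInt_unique (V:=R_CompleteNormedModule) _ _ _ _ H2) in E.
  unfold minus, plus, opp, scal in E; simpl in E; unfold mult in E; simpl in E. lra.
Qed.

Lemma FF0 : FF 0 = PI / 2.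
Proof.
  unfold FF, GG, h1. rewrite (RInt_point (V:=R_CompleteNormedModule)).
  assert (E : RInt (fun t => kk 0 t) 0 1 = PI / 4).
  { rewrite <- atan_1.
    transitivity (RInt (fun t => / (1 + t²)) 0 1).
    { apply RInt_ext. intros t _. unfold kk, Rsqr.
      replace (- (0 ^ 2 * (1 + t ^ 2)) / 2) with 0 by field. rewrite exp_0. simpl. field.
      nra. }
    apply (is_RInt_unique (V:=R_CompleteNormedModule)).
    replace (atan 1) with (minus (atan 1) (atan 0)).
    2: { rewrite atan_0. unfold minus, plus, opp; simpl. ring. }
    apply (is_RInt_derive (V:=R_CompleteNormedModule) atan).
    - intros; apply is_derive_atan.
    - intros z _. apply (ex_derive_continuous (K:=R_AbsRing) (V:=R_NormedModule)).
      auto_derive. unfold Rsqr. nra. }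
  rewrite E. unfold zero; simpl. field.
Qed.

Lemma RInt_cR c a b : RInt (fun _ => c) a b = (b - a) * c.
Proof. rewrite (RInt_const (V:=R_CompleteNormedModule)). reflexivity. Qed.

Lemma h1_bounds x : 0 <= h1 x <= gf x.
Proof.
  unfold h1. split.
  - apply Rle_trans with (RInt (fun _ => 0) 0 1). { rewrite RInt_cR. lra. }
    apply RInt_le; [lra | apply (ex_RInt_const (V:=R_CompleteNormedModule)) | apply ex_RInt_kk |].
    intros t _. unfold kk. apply Rle_mult_inv_pos. left; apply exp_pos. nra.
  - apply Rle_trans with (RInt (fun _ => gf x) 0 1). 2: { rewrite RInt_cR. lra. }
    apply RInt_le; [lra | apply ex_RInt_kk | apply (ex_RInt_const (V:=R_CompleteNormedModule)) |].
    intros t _. unfold kk, gf.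
    assert (H1 : 1 <= 1 + t ^ 2) by nra.
    assert (H2 : exp (- (x ^ 2 * (1 + t ^ 2)) / 2) <= exp (- x ^ 2 / 2)).
    { apply exp_le'. nra. }
    assert (H3 : 0 < exp (- (x ^ 2 * (1 + t ^ 2)) / 2)) by apply exp_pos.
    unfold Rdiv at 1. apply Rle_trans with (exp (- (x ^ 2 * (1 + t ^ 2)) / 2)); [|exact H2].
    rewrite <- (Rmult_1_r (exp (- (x ^ 2 * (1 + t ^ 2)) / 2))) at 2.
    apply Rmult_le_compat_l; [lra|].
    rewrite <- Rinv_1. apply Rinv_le_contravar; lra.
Qed.

Lemma GG_nonneg x : 0 <= x -> 0 <= GG x.
Proof.
  intros Hx. unfold GG.
  apply Rle_trans with (RInt (fun _ => 0) 0 x). { rewrite RInt_cR. lra. }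
  apply RInt_le; [lra | apply (ex_RInt_const (V:=R_CompleteNormedModule)) | apply ex_RInt_gf |].
  intros t _. unfold gf. left; apply exp_pos.
Qed.

Lemma GG_odd x : GG (- x) = - GG x.
Proof.
  unfold GG.
  assert (E := RInt_comp_lin (V:=R_CompleteNormedModule) gf (-1) 0 0 x (ex_RInt_gf _ _)).
  replace (-1 * 0 + 0) with 0 in E by ring. replace (-1 * x + 0) with (- x) in E by ring.
  rewrite <- E.
  rewrite (RInt_ext _ (fun y => opp (gf y))).
  - rewrite (RInt_opp (V:=R_CompleteNormedModule)); [reflexivity | apply ex_RInt_gf].
  - intros y _. unfold gf, scal, opp; simpl; unfold mult; simpl.
    replace ((-1 * y + 0) * ((-1 * y + 0) * 1)) with (y * (y * 1)) by ring. ring.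
Qed.

Definition SS := sqrt (PI / 2).

Lemma SS_pos : 0 < SS.
Proof. unfold SS. apply sqrt_lt_R0. assert (H := PI_RGT_0). lra. Qed.

Lemma SS_sq : SS * SS = PI / 2.
Proof. unfold SS. apply sqrt_sqrt. assert (H := PI_RGT_0). lra. Qed.

Lemma GG_sq x : GG x ^ 2 = PI / 2 - 2 * h1 x.
Proof. rewrite <- FF0, <- (FF_const x). unfold FF. ring. Qed.

Lemma GG_pos_bounds x : 0 <= x -> GG x <= SS /\ SS - GG x <= 2 * gf x / SS.
Proof.
  intros Hx. assert (H0 := GG_nonneg x Hx). assert (H1 := GG_sq x).
  assert (H2 := h1_bounds x). assert (H3 := SS_pos). assert (H4 := SS_sq).
  assert (A : GG x <= SS) by nra.
  split; [exact A|].
  apply (Rmult_le_reg_r SS); [lra|]. unfold Rdiv. rewrite Rmult_assoc, Rinv_l by lra.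
  nra.
Qed.

Lemma GG_abs x : Rabs (GG x) <= SS.
Proof.
  destruct (Rle_dec 0 x) as [H|H].
  - destruct (GG_pos_bounds x H). rewrite Rabs_right; [lra|]. apply Rle_ge, GG_nonneg; lra.
  - replace x with (- (- x)) by ring. rewrite GG_odd.
    destruct (GG_pos_bounds (- x)) as [A _]; [lra|].
    rewrite Rabs_Ropp, Rabs_right; [lra|]. apply Rle_ge, GG_nonneg; lra.
Qed.

Lemma gf_small eps : 0 < eps -> exists M, forall u, M <= u -> 2 * gf u / SS < eps.
Proof.
  intros He. assert (HS := SS_pos).
  exists (Rmax 1 (- 2 * ln (eps * SS / 2) + 1)). intros u Hu.
  assert (Hu1 : 1 <= u) by (eapply Rle_trans; [apply Rmax_l | exact Hu]).
  assert (Hu2 : - 2 * ln (eps * SS / 2) + 1 <= u) by (eapply Rle_trans; [apply Rmax_r | exact Hu]).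
  assert (A : gf u <= exp (- u / 2)). { unfold gf. apply exp_le'. nra. }
  assert (B : exp (- u / 2) < eps * SS / 2).
  { rewrite <- (exp_ln (eps * SS / 2)). apply exp_increasing. lra.
    apply Rmult_lt_0_compat; [apply Rmult_lt_0_compat|]; lra. }
  assert (C : 2 * gf u < eps * SS) by lra.
  apply (Rmult_lt_reg_r SS); [lra|]. unfold Rdiv. rewrite Rmult_assoc, Rinv_l by lra.
  lra.
Qed.

Lemma GG_lim_m : filterlim GG (Rbar_locally m_infty) (locally (- SS)).
Proof.
  intros P [eps HP].
  destruct (gf_small eps (cond_pos eps)) as [M HM].
  exists (- Rmax 0 M). intros y Hy. apply HP.
  change (Rabs (GG y - - SS) < eps).
  assert (Hy0 : 0 <= - y) by (assert (H := Rmax_l 0 M); lra).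
  assert (HyM : M <= - y) by (assert (H := Rmax_r 0 M); lra).
  destruct (GG_pos_bounds (- y) Hy0) as [A B].
  rewrite <- (Ropp_involutive y), GG_odd.
  rewrite Rabs_right by lra.
  assert (C := HM _ HyM). lra.
Qed.

Lemma Phi_eq z : Phi z = / 2 + GG z / (2 * SS).
Proof.
  assert (HS := SS_pos).
  assert (H : is_RInt_gen (fun u => exp (- u ^ 2 / 2)) (Rbar_locally m_infty) (at_point z) (GG z - - SS)).
  { apply (is_RInt_gen_ext (Derive GG)).
    - apply filter_forall. intros [a b] u _. simpl. apply is_derive_unique, GG_deriv.
    - apply is_RInt_gen_Derive.
      + apply filter_forall. intros ab u _. eexists. apply GG_deriv.
      + apply filter_forall. intros ab u _.
        apply (continuous_ext gf). { intros v. symmetry. apply is_derive_unique, GG_deriv. }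
        apply gf_cont.
      + apply GG_lim_m.
      + intros P HP. apply locally_singleton in HP. exact HP. }
  unfold Phi. rewrite (is_RInt_gen_unique _ _ H).
  replace (sqrt (2 * PI)) with (2 * SS).
  - field. lra.
  - replace (2 * PI) with ((2 * SS) * (2 * SS)).
    + rewrite sqrt_square; lra.
    + assert (E := SS_sq). nra.
Qed.

Definition CC := / (SS * SS).

Lemma CC_pos : 0 < CC.
Proof. unfold CC. assert (H := SS_pos). apply Rinv_0_lt_compat. nra. Qed.

Lemma Phi_01 z : 0 <= Phi z <= 1.
Proof.
  rewrite Phi_eq. assert (H := GG_abs z). assert (HS := SS_pos).
  apply Rabs_le_between in H.
  split.
  - apply Rle_trans with (/ 2 + - SS / (2 * SS)).
    + right. field. lra.
    + apply Rplus_le_compat_l. unfold Rdiv. apply Rmult_le_compat_r; [|lra].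
      left. apply Rinv_0_lt_compat. lra.
  - apply Rle_trans with (/ 2 + SS / (2 * SS)).
    + apply Rplus_le_compat_l. unfold Rdiv. apply Rmult_le_compat_r; [|lra].
      left. apply Rinv_0_lt_compat. lra.
    + right. field. lra.
Qed.

Lemma Phi_upper z : 0 <= z -> 1 - Phi z <= CC * exp (- z ^ 2 / 2).
Proof.
  intros Hz. rewrite Phi_eq. assert (HS := SS_pos).
  destruct (GG_pos_bounds z Hz) as [A B]. unfold gf in B. unfold CC.
  replace (1 - (/ 2 + GG z / (2 * SS))) with ((SS - GG z) / (2 * SS)) by (field; lra).
  replace (/ (SS * SS) * exp (- z ^ 2 / 2)) with ((2 * exp (- z ^ 2 / 2) / SS) / (2 * SS)) by (field; lra).
  unfold Rdiv at 1 3. apply Rmult_le_compat_r; [|exact B].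
  left. apply Rinv_0_lt_compat. lra.
Qed.

Lemma Phi_lower z : z <= 0 -> Phi z <= CC * exp (- z ^ 2 / 2).
Proof.
  intros Hz. rewrite Phi_eq. assert (HS := SS_pos).
  destruct (GG_pos_bounds (- z)) as [A B]; [lra|]. unfold gf in B. unfold CC.
  rewrite <- (Ropp_involutive z) at 1. rewrite GG_odd.
  replace ((- z) ^ 2) with (z ^ 2) in B by ring.
  replace (/ 2 + - GG (- z) / (2 * SS)) with ((SS - GG (- z)) / (2 * SS)) by (field; lra).
  replace (/ (SS * SS) * exp (- z ^ 2 / 2)) with ((2 * exp (- z ^ 2 / 2) / SS) / (2 * SS)) by (field; lra).
  unfold Rdiv at 1 3. apply Rmult_le_compat_r; [|exact B].
  left. apply Rinv_0_lt_compat. lra.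
Qed.
Lemma lim_bound (g : R -> R) A c M0 : 0 < c ->
  (forall t, M0 < t -> Rabs (g t) <= A * exp (- (c * t))) -> is_lim g p_infty 0.
Proof.
  intros Hc Hb. apply is_lim_spec. intros eps. simpl.
  set (B := Rabs A + 1).
  assert (HB : 0 < B) by (unfold B; assert (H := Rabs_pos A); lra).
  assert (He : 0 < eps / B) by (apply Rdiv_lt_0_compat; [apply cond_pos | lra]).
  exists (Rmax M0 (- ln (eps / B) / c)). intros t Ht.
  assert (H1 : M0 < t) by (eapply Rle_lt_trans; [apply Rmax_l | exact Ht]).
  assert (H2 : - ln (eps / B) / c < t) by (eapply Rle_lt_trans; [apply Rmax_r | exact Ht]).
  rewrite Rminus_0_r.
  assert (H3 : exp (- (c * t)) < eps / B).
  { rewrite <- (exp_ln (eps / B)) by exact He. apply exp_increasing.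
    apply (Rmult_lt_compat_l c) in H2; [|exact Hc].
    replace (c * (- ln (eps / B) / c)) with (- ln (eps / B)) in H2 by (field; lra). lra. }
  assert (H4 : A <= B) by (unfold B; assert (H := Rle_abs A); lra).
  assert (H5 : 0 < exp (- (c * t))) by apply exp_pos.
  eapply Rle_lt_trans; [apply Hb; exact H1|].
  apply Rle_lt_trans with (B * exp (- (c * t))).
  - apply Rmult_le_compat_r; lra.
  - apply (Rmult_lt_compat_l B) in H3; [|lra].
    replace (B * (eps / B)) with (pos eps) in H3 by (field; lra). exact H3.
Qed.

Lemma P_form r alpha sigma d1 d2 beta : d1 < d2 ->
  Pquad r alpha sigma d1 = 0 -> Pquad r alpha sigma d2 = 0 ->
  Pquad r alpha sigma beta = sigma ^ 2 / 2 * (((d1 + d2) / 2 - beta) ^ 2 - ((d2 - d1) / 2) ^ 2).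
Proof.
  unfold Pquad. intros H12 E1 E2.
  set (A := alpha - sigma ^ 2 / 2) in *.
  assert (HA : A = - (sigma ^ 2 / 2) * (d1 + d2)).
  { apply (Rmult_eq_reg_l (d1 - d2)); [|lra]. 
    replace ((d1 - d2) * A) with (A * d1 - A * d2) by ring.
    replace ((d1 - d2) * (- (sigma ^ 2 / 2) * (d1 + d2))) with
      (- (sigma ^ 2 / 2 * d1 ^ 2) + sigma ^ 2 / 2 * d2 ^ 2) by ring.
    lra. }
  assert (Hr : r = sigma ^ 2 / 2 * d1 ^ 2 + A * d1) by lra.
  rewrite Hr, HA. field.
Qed.

Lemma expo_bound sigma m delta beta L t : 0 < t -> 0 < sigma ->
  sigma ^ 2 / 2 * ((m - beta) ^ 2 - delta ^ 2) * t
  - (/ (sigma * sqrt t) * L + sigma * (m - beta) * sqrt t) ^ 2 / 2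
  <= - (L * (m - beta)) - sigma ^ 2 * delta ^ 2 / 2 * t.
Proof.
  intros Ht Hs. assert (Hst := sqrt_lt_R0 t Ht). assert (Hss := sqrt_sqrt t (Rlt_le _ _ Ht)).
  set (s := sqrt t) in *. set (w := / (sigma * s) * L).
  assert (Hw : w * (sigma * s) = L) by (unfold w; field; lra).
  assert (E : (w + sigma * (m - beta) * s) ^ 2 = w ^ 2 + 2 * L * (m - beta) + sigma ^ 2 * (m - beta) ^ 2 * t).
  { rewrite <- Hw, <- Hss. ring. }
  rewrite E. assert (H0 : 0 <= w ^ 2) by (apply pow2_ge_0). lra.
Qed.

Lemma z_sign sigma m beta L t : 0 < t -> 0 < sigma ->
  (/ (sigma * sqrt t) * L + sigma * (m - beta) * sqrt t) * (sigma * sqrt t)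
  = L + sigma ^ 2 * (m - beta) * t.
Proof.
  intros Ht Hs. assert (Hst := sqrt_lt_R0 t Ht). assert (Hss := sqrt_sqrt t (Rlt_le _ _ Ht)).
  set (s := sqrt t) in *. rewrite <- Hss. field. lra.
Qed.

Lemma core1 r alpha sigma d1 d2 x beta c0 : 0 < sigma -> d1 < d2 ->
  Pquad r alpha sigma d1 = 0 -> Pquad r alpha sigma d2 = 0 -> 0 < x -> 0 < c0 -> beta < d2 ->
  is_lim (fun t => Rpower x beta * exp (Pquad r alpha sigma beta * t) *
                   (1 - Hfun sigma x d1 d2 beta c0 t)) p_infty 0.
Proof.
  intros Hs H12 E1 E2 Hx Hc Hb.
  assert (HP := P_form r alpha sigma d1 d2 beta H12 E1 E2).
  set (P := Pquad r alpha sigma beta) in *.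
  assert (HRp : 0 < Rpower x beta) by (unfold Rpower; apply exp_pos).
  set (Rp := Rpower x beta) in *.
  destruct (Rle_lt_dec ((d1 + d2) / 2 - beta) 0) as [Hm|Hm].
  - assert (HPn : P < 0).
    { rewrite HP. replace (((d1 + d2) / 2 - beta) ^ 2 - ((d2 - d1) / 2) ^ 2)
        with ((beta - d1) * (beta - d2)) by field.
      assert (0 < sigma ^ 2 / 2) by nra.
      assert ((beta - d1) * (beta - d2) < 0) by nra. nra. }
    apply (lim_bound _ Rp (- P) 0); [lra|].
    intros t Ht. unfold Hfun.
    match goal with |- context [Phi ?z] => destruct (Phi_01 z) as [F1 F2] end.
    replace (- (- P * t)) with (P * t) by ring.
    assert (He := exp_pos (P * t)).
    rewrite Rabs_right.
    + rewrite <- (Rmult_1_r (Rp * exp (P * t))) at 2. apply Rmult_le_compat_l; nra.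
    + apply Rle_ge. apply Rmult_le_pos; nra.
  - set (L := ln (c0 / x)).
    set (mu := (d1 + d2) / 2 - beta) in *.
    set (de := (d2 - d1) / 2) in *.
    assert (Hde : 0 < de) by (unfold de; lra).
    apply (lim_bound _ (Rp * CC * exp (- (L * mu))) (sigma ^ 2 * de ^ 2 / 2) (Rmax 0 (- L / (sigma ^ 2 * mu)))).
    { assert (0 < sigma ^ 2) by nra. assert (0 < de ^ 2) by nra. nra. }
    intros t Ht.
    assert (Ht0 : 0 < t) by (eapply Rle_lt_trans; [apply Rmax_l | exact Ht]).
    assert (Ht1 : - L / (sigma ^ 2 * mu) < t) by (eapply Rle_lt_trans; [apply Rmax_r | exact Ht]).
    unfold Hfun. fold mu. fold L.
    set (z := / (sigma * sqrt t) * L + sigma * mu * sqrt t).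
    assert (Hzs := z_sign sigma ((d1 + d2) / 2) beta L t Ht0 Hs). fold mu in Hzs. fold z in Hzs.
    assert (Hst := sqrt_lt_R0 t Ht0).
    assert (Hsm : 0 < sigma ^ 2 * mu) by (assert (0 < sigma ^ 2) by nra; nra).
    assert (Hpos : 0 < L + sigma ^ 2 * mu * t).
    { apply (Rmult_lt_compat_l (sigma ^ 2 * mu)) in Ht1; [|exact Hsm].
      replace (sigma ^ 2 * mu * (- L / (sigma ^ 2 * mu))) with (- L) in Ht1 by (field; lra). lra. }
    assert (Hz : 0 <= z).
    { destruct (Rle_lt_dec 0 z) as [?|Hz]; [assumption|].
      assert (0 < sigma * sqrt t) by nra. nra. }
    assert (U := Phi_upper z Hz). destruct (Phi_01 z) as [F1 F2].
    assert (EB := expo_bound sigma ((d1 + d2) / 2) de beta L t Ht0 Hs). fold mu in EB. fold z in EB.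
    rewrite <- HP in EB.
    assert (HC := CC_pos).
    assert (He := exp_pos (P * t)).
    rewrite Rabs_right by (apply Rle_ge; apply Rmult_le_pos; nra).
    apply Rle_trans with (Rp * exp (P * t) * (CC * exp (- z ^ 2 / 2))).
    { apply Rmult_le_compat_l; nra. }
    replace (Rp * exp (P * t) * (CC * exp (- z ^ 2 / 2))) with
      (Rp * CC * exp (P * t - z ^ 2 / 2)).
    2: { unfold Rminus. rewrite exp_plus. replace (- (z ^ 2 / 2)) with (- z ^ 2 / 2) by field. ring. }
    rewrite (Rmult_assoc (Rp * CC) (exp _) (exp _)), <- exp_plus.
    apply Rmult_le_compat_l; [nra|]. apply exp_le'. lra.
Qed.

Lemma core2 r alpha sigma d1 d2 x beta c0 : 0 < sigma -> d1 < d2 ->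
  Pquad r alpha sigma d1 = 0 -> Pquad r alpha sigma d2 = 0 -> 0 < x -> 0 < c0 -> d1 < beta ->
  is_lim (fun t => Rpower x beta * exp (Pquad r alpha sigma beta * t) *
                   Hfun sigma x d1 d2 beta c0 t) p_infty 0.
Proof.
  intros Hs H12 E1 E2 Hx Hc Hb.
  assert (HP := P_form r alpha sigma d1 d2 beta H12 E1 E2).
  set (P := Pquad r alpha sigma beta) in *.
  assert (HRp : 0 < Rpower x beta) by (unfold Rpower; apply exp_pos).
  set (Rp := Rpower x beta) in *.
  destruct (Rle_lt_dec 0 ((d1 + d2) / 2 - beta)) as [Hm|Hm].
  - assert (HPn : P < 0).
    { rewrite HP. replace (((d1 + d2) / 2 - beta) ^ 2 - ((d2 - d1) / 2) ^ 2)
        with ((beta - d1) * (beta - d2)) by field.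
      assert (0 < sigma ^ 2 / 2) by nra.
      assert ((beta - d1) * (beta - d2) < 0) by nra. nra. }
    apply (lim_bound _ Rp (- P) 0); [lra|].
    intros t Ht. unfold Hfun.
    match goal with |- context [Phi ?z] => destruct (Phi_01 z) as [F1 F2] end.
    replace (- (- P * t)) with (P * t) by ring.
    assert (He := exp_pos (P * t)).
    rewrite Rabs_right.
    + rewrite <- (Rmult_1_r (Rp * exp (P * t))) at 2. apply Rmult_le_compat_l; nra.
    + apply Rle_ge. apply Rmult_le_pos; nra.
  - set (L := ln (c0 / x)).
    set (mu := (d1 + d2) / 2 - beta) in *.
    set (de := (d2 - d1) / 2) in *.
    assert (Hde : 0 < de) by (unfold de; lra).
    apply (lim_bound _ (Rp * CC * exp (- (L * mu))) (sigma ^ 2 * de ^ 2 / 2) (Rmax 0 (- L / (sigma ^ 2 * mu)))).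
    { assert (0 < sigma ^ 2) by nra. assert (0 < de ^ 2) by nra. nra. }
    intros t Ht.
    assert (Ht0 : 0 < t) by (eapply Rle_lt_trans; [apply Rmax_l | exact Ht]).
    assert (Ht1 : - L / (sigma ^ 2 * mu) < t) by (eapply Rle_lt_trans; [apply Rmax_r | exact Ht]).
    unfold Hfun. fold mu. fold L.
    set (z := / (sigma * sqrt t) * L + sigma * mu * sqrt t).
    assert (Hzs := z_sign sigma ((d1 + d2) / 2) beta L t Ht0 Hs). fold mu in Hzs. fold z in Hzs.
    assert (Hst := sqrt_lt_R0 t Ht0).
    assert (Hsm : sigma ^ 2 * mu < 0) by (assert (0 < sigma ^ 2) by nra; nra).
    assert (Hpos : L + sigma ^ 2 * mu * t < 0).
    { apply (Rmult_lt_compat_l (- (sigma ^ 2 * mu))) in Ht1; [|lra].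
      replace (- (sigma ^ 2 * mu) * (- L / (sigma ^ 2 * mu))) with L in Ht1 by (field; lra). lra. }
    assert (Hz : z <= 0).
    { destruct (Rle_lt_dec z 0) as [?|Hz]; [assumption|].
      assert (0 < sigma * sqrt t) by nra. nra. }
    assert (U := Phi_lower z Hz). destruct (Phi_01 z) as [F1 F2].
    assert (EB := expo_bound sigma ((d1 + d2) / 2) de beta L t Ht0 Hs). fold mu in EB. fold z in EB.
    rewrite <- HP in EB.
    assert (HC := CC_pos).
    assert (He := exp_pos (P * t)).
    rewrite Rabs_right by (apply Rle_ge; apply Rmult_le_pos; nra).
    apply Rle_trans with (Rp * exp (P * t) * (CC * exp (- z ^ 2 / 2))).
    { apply Rmult_le_compat_l; nra. }
    replace (Rp * exp (P * t) * (CC * exp (- z ^ 2 / 2))) with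
      (Rp * CC * exp (P * t - z ^ 2 / 2)).
    2: { unfold Rminus. rewrite exp_plus. replace (- (z ^ 2 / 2)) with (- z ^ 2 / 2) by field. ring. }
    rewrite (Rmult_assoc (Rp * CC) (exp _) (exp _)), <- exp_plus.
    apply Rmult_le_compat_l; [nra|]. apply exp_le'. lra.
Qed.

Theorem lemma2 (r alpha sigma d1 d2 x beta a b : R)
  (hsigma : 0 < sigma)
  (hd12 : d1 < d2)
  (hd1 : Pquad r alpha sigma d1 = 0)
  (hd2 : Pquad r alpha sigma d2 = 0)
  (hx : 0 < x) (ha : 0 < a) (hb : 0 < b) :
  (beta < d2 ->
     is_lim (fun t => Rpower x beta * exp (Pquad r alpha sigma beta * t) *
                      (1 - Hfun sigma x d1 d2 beta a t)) p_infty 0) /\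
  (d1 < beta ->
     is_lim (fun t => Rpower x beta * exp (Pquad r alpha sigma beta * t) *
                      Hfun sigma x d1 d2 beta b t) p_infty 0) /\
  (beta = 0 ->
     is_lim (fun t => Rpower x beta * exp (Pquad r alpha sigma beta * t) *
                      (Hfun sigma x d1 d2 beta b t - Hfun sigma x d1 d2 beta a t))
       p_infty 0).
Proof.
  split; [|split].
  - intros H. apply core1; assumption.
  - intros H. apply core2; assumption.
  - intros H. destruct (Rlt_dec beta d2) as [H2|H2].
    + assert (La := core1 r alpha sigma d1 d2 x beta a hsigma hd12 hd1 hd2 hx ha H2).
      assert (Lb := core1 r alpha sigma d1 d2 x beta b hsigma hd12 hd1 hd2 hx hb H2).
      assert (L := is_lim_minus' _ _ p_infty 0 0 La Lb).
      replace (0 - 0) with 0 in L by ring.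
      eapply is_lim_ext; [|exact L]. intros y. simpl. ring.
    + assert (H1 : d1 < beta) by lra.
      assert (La := core2 r alpha sigma d1 d2 x beta a hsigma hd12 hd1 hd2 hx ha H1).
      assert (Lb := core2 r alpha sigma d1 d2 x beta b hsigma hd12 hd1 hd2 hx hb H1).
      assert (L := is_lim_minus' _ _ p_infty 0 0 Lb La).
      replace (0 - 0) with 0 in L by ring.
      eapply is_lim_ext; [|exact L]. intros y. simpl. ring.
Qed.
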